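(* Let $p,q\in[0,1]$ be rational numbers and $R\in\{\mathrm C,\mathrm S\}$. Then $\mathscr S^{p,q}_{\mathscr F_R}$ is exactly the set of all recursive temporal selection processes.
   Context: $\mathbb N_0=\{0,1,2,\dots\}$. $\mathbb S=\bigcup_{n\in\mathbb N_0}\{0,1\}^n$ is the set of finite binary sequences (situations), $\square$ the empty sequence, $|s|$ the length, $sx$ concatenation. For $r\in[0,1]$ and $f:\{0,1\}\to\mathbb R$, $E_r(f)=rf(1)+(1-r)f(0)$. A real process is a map $F:\mathbb S\to\mathbb R$, and $\Delta F(s)$ is the function $x\mapsto F(sx)-F(s)$. A test process is a non-negative real process with $F(\square)=1$. A map from $\mathbb S$ (or $\mathbb N_0$) to $\mathbb Q$ or $\{0,1\}$ is recursive if it is computable by a Turing machine. $\mathscr F_{\mathrm C}=\mathscr F_{\mathrm S}$ denotes the set of positive, rational-valued, recursive test processes. A selection process is a map $S:\mathbb S\to\{0,1\}$; it is temporal if $S(s)$ depends only on $|s|$ (written $S(n)$). For a real process $F$ and $r\in[0,1]$, $S^r_F$ is the temporal selection process with $S^r_F(n)=1$ if $E_r(\Delta F(s))>0$ for some $s\in\mathbb S$ with $|s|=n$, and $S^r_F(n)=0$ otherwise. For a set $\mathscr F$ of real processes, $\mathscr S^{p,q}_{\mathscr F}=\{S^r_F: F\in\mathscr F,\ r\in\{p,q\}\}$. *)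

(* Defs.v *)
From HB Require Import structures.
From mathcomp Require Import all_boot all_order all_algebra.
Set Implicit Arguments.
Unset Strict Implicit.
Unset Printing Implicit Defensive.
Import Order.TTheory GRing.Theory Num.Theory.

Inductive prf : Type :=
| PZero : prf
| PSucc : prf
| PProj : nat -> prf
| PComp : prf -> list prf -> prf
| PPrec : prf -> prf -> prf
| PMin  : prf -> prf.

Inductive evalp : prf -> seq nat -> nat -> Prop :=
| ev_zero v : evalp PZero v 0
| ev_succ x v : evalp PSucc (x :: v) x.+1
| ev_proj i v : (i < size v)%N -> evalp (PProj i) v (nth 0%N v i)
| ev_comp f gs v ys y :
    evalps gs v ys -> evalp f ys y -> evalp (PComp f gs) v y
| ev_prec0 f g v y : evalp f v y -> evalp (PPrec f g) (0%N :: v) y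
| ev_precS f g n v y z :
    evalp (PPrec f g) (n :: v) y -> evalp g (n :: y :: v) z ->
    evalp (PPrec f g) (n.+1 :: v) z
| ev_min f v n :
    evalp f (n :: v) 0 ->
    (forall m, (m < n)%N -> exists k, evalp f (m :: v) k.+1) ->
    evalp (PMin f) v n
with evalps : list prf -> seq nat -> seq nat -> Prop :=
| evs_nil v : evalps nil v [::]
| evs_cons g gs v y ys : evalp g v y -> evalps gs v ys -> evalps (g :: gs) v (y :: ys).

Definition recursive_nat (f : nat -> nat) : Prop :=
  exists e : prf, forall n, evalp e [:: n] (f n).

(* A situation is a [seq bool] (true = 1, false = 0); [rcons s x] is sx. *)

(* Bijective coding of situations by natural numbers. *)
Fixpoint code_sit (s : seq bool) : nat :=
  match s with
  | [::] => 0%N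
  | b :: t => (code_sit t).*2 + (if b then 2 else 1)
  end.

Definition recursive_sit_bool (S : seq bool -> bool) : Prop :=
  exists g : nat -> nat, recursive_nat g /\
    forall s, g (code_sit s) = nat_of_bool (S s).

Local Open Scope ring_scope.

Definition recursive_sit_rat (F : seq bool -> rat) : Prop :=
  exists a b c : nat -> nat,
    [/\ recursive_nat a, recursive_nat b, recursive_nat c &
      forall s, let n := code_sit s in
        F s = ((a n)%:R - (b n)%:R) / ((c n).+1)%:R].

Definition Er (R : numDomainType) (r : R) (f : bool -> R) : R :=
  r * f true + (1 - r) * f false.

Definition DeltaF (R : numDomainType) (F : seq bool -> R) (s : seq bool) : bool -> R :=
  fun x => F (rcons s x) - F s.

Definition test_process (R : numDomainType) (F : seq bool -> R) : Prop :=
  (forall s, 0 <= F s) /\ F [::] = 1.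

(* F_C = F_S : positive, rational-valued, recursive test processes. *)
Definition F_C (F : seq bool -> rat) : Prop :=
  [/\ test_process F, (forall s, 0 < F s) & recursive_sit_rat F].

Definition temporal (S : seq bool -> bool) : Prop :=
  forall s t, size s = size t -> S s = S t.

Definition SrF_nat (R : numDomainType) (r : R) (F : seq bool -> R) (n : nat) : bool :=
  [exists t : n.-tuple bool, 0 < Er r (DeltaF F (tval t))].

Definition SrF (R : numDomainType) (r : R) (F : seq bool -> R) : seq bool -> bool :=
  fun s => SrF_nat r F (size s).

Definition in_Spq_FC (p q : rat) (S : seq bool -> bool) : Prop :=
  exists F : seq bool -> rat, exists r : rat,
    [/\ F_C F, (r = p \/ r = q) & forall s, S s = SrF r F s].

(* Main.v *)
Require Import Defs.
From mathcomp Require Import all_boot all_order all_algebra.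
From mathcomp Require Import zify ring lra.
Import Order.TTheory GRing.Theory Num.Theory.
Set Implicit Arguments.
Unset Strict Implicit.

Definition PR k (f : seq nat -> nat) :=
  exists e, forall v, size v = k -> evalp e v (f v).

Lemma PR_ext k f g : (forall v, size v = k -> f v = g v) -> PR k f -> PR k g.
Proof. move=> H [e He]; exists e => v Hv; rewrite -H //; exact: He. Qed.

Lemma PR_proj k i : i < k -> PR k (fun v => nth 0 v i).
Proof. move=> Hi; exists (PProj i) => v Hv; apply: ev_proj; by rewrite Hv. Qed.

Lemma PR_zero k : PR k (fun _ => 0).
Proof. exists PZero => v _; constructor. Qed.

Lemma PR_succ k f : PR k f -> PR k (fun v => (f v).+1).
Proof.
move=> [e He]; exists (PComp PSucc [:: e]) => v Hv.
apply: (@ev_comp _ _ _ [:: f v]); last constructor.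
constructor; [exact: He | constructor].
Qed.

Lemma PR_cst k n : PR k (fun _ => n).
Proof. elim: n => [|n IH]; [exact: PR_zero | exact: PR_succ]. Qed.

Fixpoint allPR k (gs : seq (seq nat -> nat)) : Prop :=
  match gs with [::] => True | g :: gs' => PR k g /\ allPR k gs' end.

Lemma allPR_evs k gs : allPR k gs ->
  exists es, forall v, size v = k -> evalps es v (map (fun g => g v) gs).
Proof.
elim: gs => [|g gs IH] /=; first by exists nil => v _; constructor.
move=> [[e He] /IH [es Hes]]; exists (e :: es) => v Hv; constructor; auto.
Qed.

Lemma PR_comp k m f gs : PR m f -> size gs = m -> allPR k gs ->
  PR k (fun v => f (map (fun g => g v) gs)).
Proof.
move=> [ef Hf] Hs /allPR_evs [es Hes]; exists (PComp ef es) => v Hv.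
apply: ev_comp; first exact: Hes.
apply: Hf; by rewrite size_map.
Qed.

Fixpoint recf (i : nat) (s : nat -> nat -> nat) (j : nat) : nat :=
  match j with 0 => i | j'.+1 => s j' (recf i s j') end.

Lemma PR_prec k f g : PR k f -> PR k.+2 g ->
  PR k.+1 (fun v => recf (f (behead v)) (fun j a => g (j :: a :: behead v)) (head 0 v)).
Proof.
move=> [ef Hf] [eg Hg]; exists (PPrec ef eg) => -[|n w] //= [Hw].
elim: n => [|n IH] /=; first by apply: ev_prec0; apply: Hf.
apply: ev_precS IH _; apply: Hg => /=; by rewrite Hw.
Qed.

Lemma PR_add : PR 2 (fun v => nth 0 v 0 + nth 0 v 1).
Proof.
have := PR_prec (PR_proj (ltnSn 0)) (@PR_succ 3 _ (@PR_proj 3 1 isT)).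
apply: PR_ext => -[|x [|y [|]]] //= _.
by elim: x => //= x ->.
Qed.

Lemma PR_pred : PR 1 (fun v => (nth 0 v 0).-1).
Proof.
have := PR_prec (@PR_zero 0) (@PR_proj 2 0 isT).
by apply: PR_ext => -[|x [|]] //= _; case: x.
Qed.

Lemma PR_subr : PR 2 (fun v => nth 0 v 1 - nth 0 v 0).
Proof.
have H1 : PR 3 (fun v => (nth 0 v 1).-1).
  have := @PR_comp 3 1 _ [:: fun v => nth 0 v 1] PR_pred erefl.
  move=> /(_ (conj (@PR_proj 3 1 isT) I)); exact: PR_ext.
have := PR_prec (PR_proj (ltnSn 0)) H1.
apply: PR_ext => -[|x [|y [|]]] //= _.
by elim: x => //= [|x ->]; rewrite ?subn0 ?subnS.
Qed.

Lemma PR_sub : PR 2 (fun v => nth 0 v 0 - nth 0 v 1).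
Proof.
have := @PR_comp 2 2 _ [:: fun v => nth 0 v 1; fun v => nth 0 v 0] PR_subr erefl.
move=> /(_ (conj (@PR_proj 2 1 isT) (conj (@PR_proj 2 0 isT) I))).
by apply: PR_ext => -[|x [|y [|]]].
Qed.

Lemma PR_mul : PR 2 (fun v => nth 0 v 0 * nth 0 v 1).
Proof.
have H1 : PR 3 (fun v => nth 0 v 1 + nth 0 v 2).
  have := @PR_comp 3 2 _ [:: fun v => nth 0 v 1; fun v => nth 0 v 2] PR_add erefl.
  move=> /(_ (conj (@PR_proj 3 1 isT) (conj (@PR_proj 3 2 isT) I))); exact: PR_ext.
have := PR_prec (@PR_zero 1) H1.
apply: PR_ext => -[|x [|y [|]]] //= _.
by elim: x => //= x ->; rewrite mulSn addnC.
Qed.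

Inductive ex : Type :=
| EVar of nat | ECst of nat | EAdd of ex & ex | ESub of ex & ex | EMul of ex & ex
| ECall of (nat -> nat) & ex | ERec of ex & ex & ex.

Fixpoint eval (e : ex) (v : seq nat) : nat :=
  match e with
  | EVar i => nth 0 v i
  | ECst n => n
  | EAdd a b => eval a v + eval b v
  | ESub a b => eval a v - eval b v
  | EMul a b => eval a v * eval b v
  | ECall f a => f (eval a v)
  | ERec N i s => recf (eval i v) (fun j a => eval s (j :: a :: v)) (eval N v)
  end.

Fixpoint wf k (e : ex) : Prop :=
  match e with
  | EVar i => i < k
  | ECst _ => True
  | EAdd a b | ESub a b | EMul a b => wf k a /\ wf k b
  | ECall f a => recursive_nat f /\ wf k a
  | ERec N i s => [/\ wf k N, wf k i & wf k.+2 s]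
  end.

Lemma PR_bin k (op : nat -> nat -> nat) f g :
  PR 2 (fun v => op (nth 0 v 0) (nth 0 v 1)) -> PR k f -> PR k g ->
  PR k (fun v => op (f v) (g v)).
Proof.
move=> Hop Hf Hg.
exact: (@PR_comp k 2 _ [:: f; g] Hop erefl (conj Hf (conj Hg I))).
Qed.

Lemma allPR_proj k l : all (fun j => j < k) l ->
  allPR k (map (fun j v => nth 0 v j) l).
Proof. elim: l => //= j l IH /andP [Hj Hl]; split; [exact: PR_proj | exact: IH]. Qed.

Lemma PR_eval e : forall k, wf k e -> PR k (eval e).
Proof.
elim: e => [i|n|a IHa b IHb|a IHa b IHb|a IHa b IHb|f a IHa|N IHN i IHi s IHs] k /=.
- exact: PR_proj.
- move=> _; exact: PR_cst.
- move=> [Ha Hb]; exact: PR_bin PR_add (IHa _ Ha) (IHb _ Hb).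
- move=> [Ha Hb]; exact: PR_bin PR_sub (IHa _ Ha) (IHb _ Hb).
- move=> [Ha Hb]; exact: PR_bin PR_mul (IHa _ Ha) (IHb _ Hb).
- move=> [[ef Hf] Ha].
  have Hf1 : PR 1 (fun v => f (nth 0 v 0)).
    by exists ef => -[|x [|]] //= _; apply: Hf.
  exact: (@PR_comp k 1 _ [:: eval a] Hf1 erefl (conj (IHa _ Ha) I)).
- move=> [HN Hi Hs].
  have P := PR_prec (IHi _ Hi) (IHs _ Hs).
  have := @PR_comp k k.+1 _ (eval N :: map (fun j v => nth 0 v j) (iota 0 k)) P.
  rewrite /= size_map size_iota => /(_ erefl (conj (IHN _ HN) (allPR_proj _))).
  have Hall : all (fun j => j < k) (iota 0 k).
    by apply/allP => j; rewrite mem_iota.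
  move=> /(_ Hall); apply: PR_ext => v Hv /=.
  by rewrite -map_comp /= -[X in map _ (iota 0 X)]Hv -/(mkseq _ _) mkseq_nth.
Qed.

Lemma rec_of_wf e : wf 1 e -> recursive_nat (fun n => eval e [:: n]).
Proof. move=> /PR_eval [c Hc]; exists c => n; exact: Hc. Qed.

Definition eHalf := ERec (EVar 0) (ECst 0) (EAdd (EVar 1) (ESub (EVar 0) (EAdd (EVar 1) (EVar 1)))).
Definition halfF n := eval eHalf [:: n].
Lemma halfF_rec : recursive_nat halfF.
Proof. exact: (@rec_of_wf eHalf). Qed.
Lemma halfFE n : halfF n = n./2.
Proof.
rewrite /halfF /=; elim: n => //= n ->.
rewrite uphalf_half; move: (odd_double_half n); rewrite -addnn; lia.
Qed.
Global Opaque halfF.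

Definition ePow2 := ERec (EVar 0) (ECst 1) (EAdd (EVar 1) (EVar 1)).
Definition pow2F n := eval ePow2 [:: n].
Lemma pow2F_rec : recursive_nat pow2F.
Proof. exact: (@rec_of_wf ePow2). Qed.
Lemma pow2FE n : pow2F n = 2 ^ n.
Proof. rewrite /pow2F /=; elim: n => //= n ->; rewrite expnS; lia. Qed.
Global Opaque pow2F.

Definition hstepF n := eval (ECall halfF (ESub (EVar 0) (ECst 1))) [:: n].
Lemma hstepF_rec : recursive_nat hstepF.
Proof. apply: rec_of_wf; split => //; exact: halfF_rec. Qed.
Lemma hstepFE n : hstepF n = (n - 1)./2.
Proof. by rewrite /hstepF /= halfFE. Qed.
Global Opaque hstepF.

Definition oddF n := eval (ESub (EVar 0) (EMul (ECst 2) (ECall halfF (EVar 0)))) [:: n].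
Lemma oddF_rec : recursive_nat oddF.
Proof. apply: rec_of_wf; split => //; split => //; split => //; exact: halfF_rec. Qed.
Lemma oddFE n : oddF n = odd n.
Proof.
rewrite /oddF /= halfFE; move: (odd_double_half n); rewrite -addnn; lia.
Qed.
Global Opaque oddF.

Definition ePos x := ESub (ECst 1) (ESub (ECst 1) x).
Lemma ePosE x v : eval (ePos x) v = (0 < eval x v).
Proof. rewrite /=; case: (eval x v) => //= n; lia. Qed.

Definition eH iv nv := ERec (EVar iv) (EVar nv) (ECall hstepF (EVar 1)).
Lemma eHE iv nv v : eval (eH iv nv) v = iter (nth 0 v iv) hstepF (nth 0 v nv).
Proof. rewrite /=; elim: (nth 0 v iv) => //= n ->. done. Qed.

Definition sumN (t : nat -> nat) N := recf 0 (fun j a => a + t j) N.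

Lemma recf_sum s t N : (forall j a, s j a = a + t j) -> recf 0 s N = sumN t N.
Proof. move=> H; elim: N => //= N ->; by rewrite H. Qed.

Lemma sumN_ext t t' N : (forall j, j < N -> t j = t' j) -> sumN t N = sumN t' N.
Proof.
elim: N => // N IH H.
rewrite (_ : sumN t N.+1 = sumN t N + t N) // (_ : sumN t' N.+1 = sumN t' N + t' N) //.
rewrite IH ?H //; move=> j Hj; apply: H; lia.
Qed.

Lemma sumN_trunc t N M : M <= N -> (forall j, M <= j -> t j = 0) -> sumN t N = sumN t M.
Proof.
move=> HM Ht; elim: N HM => [|N IH] HM; first by case: M HM Ht.
case: (ltnP M N.+1) => HMN; last by (have E : M = N.+1 by lia); rewrite E.
rewrite (_ : sumN t N.+1 = sumN t N + t N) // IH //; rewrite Ht //; lia.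
Qed.

Lemma sumN_pos t N : (0 < sumN t N) <-> exists2 j, j < N & 0 < t j.
Proof.
elim: N => [|N IH]; first by split => // -[].
rewrite (_ : sumN t N.+1 = sumN t N + t N) // addn_gt0; split.
- case/orP => [/IH [j Hj Ht]|H]; [exists j => //; lia | by exists N].
- move=> [j Hj Ht]; case: (ltnP j N) => HjN.
    by apply/orP; left; apply/IH; exists j.
  have E : j = N by lia.
  by rewrite -E Ht orbT.
Qed.

Arguments ePos : simpl never.
Arguments eH : simpl never.

Lemma wf_ePos k x : wf k (ePos x) <-> wf k x.
Proof. by rewrite /ePos /=; split => [[_ [_ H]]|H]. Qed.
Lemma wf_eH k iv nv : iv < k -> nv < k -> wf k (eH iv nv).
Proof. by rewrite /eH /= => H1 H2; split => //; split => //; exact: hstepF_rec. Qed.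

Lemma sumN_const1 M : sumN (fun _ => 1) M = M.
Proof. elim: M => // M IH; by rewrite (_ : sumN _ M.+1 = sumN (fun _ => 1) M + 1) // IH addn1. Qed.

Lemma code_rcons t x : code_sit (rcons t x) = code_sit t + (if x then 2 else 1) * 2 ^ size t.
Proof.
elim: t => [|b t IH] /=; first by case: x.
rewrite IH expnS -!addnn; move: IH; case: x; case: b; lia.
Qed.

Lemma code_nseq i : code_sit (nseq i false) = 2 ^ i - 1.
Proof.
elim: i => //= i ->; rewrite expnS -addnn.
have : 0 < 2 ^ i by rewrite expn_gt0.
lia.
Qed.

Lemma hstep_cons b t : hstepF (code_sit (b :: t)) = code_sit t.
Proof.
rewrite hstepFE /=; case: b.
- rewrite (_ : _ - 1 = true + (code_sit t).*2); first exact: half_bit_double.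
  rewrite -addnn /=; lia.
- rewrite (_ : _ - 1 = false + (code_sit t).*2); first exact: half_bit_double.
  rewrite -addnn /=; lia.
Qed.

Lemma hstep0 : hstepF 0 = 0.
Proof. by rewrite hstepFE. Qed.

Lemma iter_hstep0 i : iter i hstepF 0 = 0.
Proof. by elim: i => //= i ->; rewrite hstep0. Qed.

Lemma iter_hstep i s : iter i hstepF (code_sit s) = code_sit (drop i s).
Proof.
elim: i s => [|i IH] s; first by rewrite drop0.
rewrite iterSr; case: s => [|b t]; first by rewrite hstep0 iter_hstep0.
by rewrite hstep_cons IH.
Qed.

Lemma code_pos s : (0 < code_sit s) = (s != [::]).
Proof. by case: s => //= b t; case: b; rewrite addn_gt0 orbT. Qed.

Lemma size_le_code s : size s <= code_sit s.
Proof. elim: s => //= b t IH; rewrite -addnn; case: b; lia. Qed.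

Lemma code_drop_nth s i : i < size s ->
  code_sit (drop i s) = (code_sit (drop i.+1 s)).*2 + (if nth false s i then 2 else 1).
Proof. by move=> Hi; rewrite (drop_nth false Hi). Qed.

Definition eLen := ERec (EVar 0) (ECst 0) (EAdd (EVar 1) (ePos (eH 0 2))).
Definition lenF n := eval eLen [:: n].
Lemma lenF_rec : recursive_nat lenF.
Proof.
apply: (@rec_of_wf eLen); split => //; split => //; apply/wf_ePos; exact: wf_eH.
Qed.

Lemma pos_sub x : 1 - (1 - x) = (0 < x).
Proof. case: x => //= n; lia. Qed.
Lemma recf_iter n f j : recf n (fun _ a => f a) j = iter j f n.
Proof. by elim: j => //= j ->. Qed.
Lemma lenFE s : lenF (code_sit s) = size s.
Proof.
rewrite /lenF /= (@recf_sum _ (fun j => 0 < code_sit (drop j s))); last first.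
  by move=> j a; rewrite pos_sub recf_iter iter_hstep.
rewrite (@sumN_trunc _ _ (size s)) ?size_le_code //; last first.
  by move=> j Hj; rewrite code_pos drop_oversize.
rewrite -[RHS]sumN_const1; apply: sumN_ext => j Hj.
by rewrite code_pos -size_eq0 size_drop subn_eq0 -ltnNge Hj.
Qed.


Lemma code_range t : 2 ^ size t - 1 <= code_sit t < 2 ^ (size t).+1 - 1.
Proof.
elim: t => [|b t IH] //=; move: IH; rewrite !expnS -!addnn.
have : 0 < 2 ^ size t by rewrite expn_gt0.
case: b; lia.
Qed.

Lemma code_onto L m : 2 ^ L - 1 <= m < 2 ^ L.+1 - 1 ->
  exists t, size t = L /\ code_sit t = m.
Proof.
elim: L m => [|L IH] m.
  by rewrite expn0 expn1 => Hm; exists [::]; split => //=; lia.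
rewrite !expnS => Hm.
have Hp : 0 < 2 ^ L by rewrite expn_gt0.
move: IH; rewrite expnS => IH.
have Hh := odd_double_half m; rewrite -addnn in Hh.
case: (odd m) Hh => /= Hh.
- have H1 : 2 ^ L - 1 <= m./2 < 2 * 2 ^ L - 1 by lia.
  have [t [Ht Hc]] := IH _ H1.
  exists (false :: t); split; first by rewrite /= Ht.
  rewrite /= Hc -addnn; lia.
- have H1 : 2 ^ L - 1 <= (m./2).-1 < 2 * 2 ^ L - 1 by lia.
  have [t [Ht Hc]] := IH _ H1.
  exists (true :: t); split; first by rewrite /= Ht.
  rewrite /= Hc -addnn; lia.
Qed.

Section Dir2.
Variables (S : seq bool -> bool) (g : nat -> nat) (x0 : bool).
Hypothesis Htemp : temporal S.
Hypothesis Hg : recursive_nat g.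
Hypothesis HgS : forall s, g (code_sit s) = S s.

Definition eHH := eH 0 2.
Definition eK :=
  ERec (EVar 0) (ECst 0)
    (EAdd (EVar 1)
       (EMul (EMul (ePos eHH)
                   (ESub (EAdd (ECst x0) (ECall oddF eHH)) (EMul (EMul (ECst 2) (ECst x0)) (ECall oddF eHH))))
             (ECall g (ESub (ECall pow2F (EVar 0)) (ECst 1))))).

Definition aF n := eval (ECall pow2F eK) [:: n].

Lemma aF_rec : recursive_nat aF.
Proof.
apply: rec_of_wf; rewrite /eK /ePos /eHH /eH /=.
repeat split => //; first [exact: pow2F_rec | exact: oddF_rec | exact: hstepF_rec | exact: Hg].
Qed.

Definition Sn j := S (nseq j false).
Definition cnt s := sumN (fun j => ((nth false s j == x0) && Sn j) : nat) (size s).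

Lemma aFE s : aF (code_sit s) = 2 ^ cnt s.
Proof.
rewrite /aF /= pow2FE; congr (2 ^ _).
rewrite (@recf_sum _ (fun j => (0 < code_sit (drop j s)) *
   ((x0 + odd (code_sit (drop j s))) - 2 * x0 * odd (code_sit (drop j s))) * g (2 ^ j - 1))); last first.
  by move=> j a; rewrite pos_sub recf_iter iter_hstep oddFE pow2FE.
rewrite (@sumN_trunc _ _ (size s)) ?size_le_code //; last first.
  by move=> j Hj; rewrite code_pos drop_oversize.
apply: sumN_ext => j Hj.
rewrite code_drop_nth // -code_nseq HgS /Sn.
by case: (nth false s j); case: x0; case: (S _); rewrite /= ?addn2 ?addn1 /= ?odd_double ?ltn0Sn.
Qed.


Local Open Scope ring_scope.

Definition Fq s : rat := (2 ^ cnt s)%:R.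

Lemma cnt_rcons t x : cnt (rcons t x) = (cnt t + ((x == x0) && Sn (size t)))%N.
Proof.
rewrite /cnt size_rcons.
change (sumN ?f (size t).+1) with (sumN f (size t) + f (size t))%N.
rewrite /= nth_rcons ltnn eqxx; congr (_ + _)%N; apply: sumN_ext => j Hj.
by rewrite nth_rcons Hj.
Qed.

Lemma ErF (p : rat) t : Er p (DeltaF Fq t) =
  if Sn (size t) then (if x0 then p else 1 - p) * Fq t else 0.
Proof.
rewrite /Er /DeltaF /Fq !cnt_rcons.
by case: (Sn _); case: x0 => /=; rewrite ?addn0 ?addn1 ?expnS ?natrM; ring.
Qed.

Lemma dir2 (p q : rat) : 0 <= p -> x0 = (0 < p) -> in_Spq_FC p q S.
Proof.
move=> Hp Hx0; exists Fq, p; split; last 1 first.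
- move=> s; rewrite /SrF /SrF_nat.
  have -> : S s = Sn (size s) by apply: Htemp; rewrite size_nseq.
  have Hc : 0 < (if x0 then p else 1 - p).
    rewrite Hx0; case: ifP => // /negbT; rewrite -leNgt => Hp0.
    have -> : p = 0 by apply/eqP; rewrite eq_le Hp0 Hp.
    by rewrite subr0.
  have HF : forall t, 0 < Fq t by move=> t; rewrite /Fq ltr0n expn_gt0.
  case HS: (Sn (size s)).
  + apply/esym/existsP; exists (nseq_tuple (size s) false).
    by rewrite ErF /= size_nseq HS mulr_gt0.
  + apply/esym/existsP => -[t]; by rewrite ErF size_tuple HS ltxx.
- split.
  + split; first by move=> s; rewrite /Fq ler0n.
    by rewrite /Fq /cnt.
  + by move=> s; rewrite /Fq ltr0n expn_gt0.
  + exists aF, (fun _ => 0%N), (fun _ => 0%N); split.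
    * exact: aF_rec.
    * by exists PZero => n; constructor.
    * by exists PZero => n; constructor.
    * by move=> s /=; rewrite aFE subr0 divr1.
- by left.
Qed.

End Dir2.

Section Dir1.
Variables (a b c : nat -> nat) (u d : nat).
Hypotheses (Ha : recursive_nat a) (Hb : recursive_nat b) (Hc : recursive_nat c).

Definition eA x := ESub (ECall a x) (ECall b x).
Definition eC x := EAdd (ECall c x) (ECst 1).
Definition eLx := ECall lenF (EVar 2).
Definition eP1 := ECall pow2F eLx.
Definition eP2 := ECall pow2F (EAdd eLx (ECst 1)).
Definition em := EVar 0.
Definition emT := EAdd em eP2.
Definition emF := EAdd em eP1.
Definition econd := ESub (ECst 1) (ESub (ESub eP1 (ECst 1)) em).
Definition elhs := EMul (EMul (EMul (ECst d) (eA em)) (eC emT)) (eC emF).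
Definition erhs := EAdd (EMul (EMul (EMul (ECst u) (eA emT)) (eC em)) (eC emF))
                        (EMul (EMul (EMul (ECst (d - u)) (eA emF)) (eC em)) (eC emT)).
Definition ebody := EMul econd (ePos (ESub erhs elhs)).
Definition eG := ePos (ERec (ESub (ECall pow2F (EAdd (ECall lenF (EVar 0)) (ECst 1))) (ECst 1))
                            (ECst 0) (EAdd (EVar 1) ebody)).

Definition GF n := eval eG [:: n].

Lemma GF_rec : recursive_nat GF.
Proof.
apply: rec_of_wf; rewrite /eG /ebody /econd /elhs /erhs /emT /emF /em /eP1 /eP2 /eLx /eA /eC /ePos /=.
repeat split => //; first [exact: pow2F_rec | exact: lenF_rec | exact: Ha | exact: Hb | exact: Hc].
Qed.

Definition AF n := (a n - b n)%N.
Definition CF n := (c n).+1.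
Definition lhsN L m := (d * AF m * CF (m + 2 * 2 ^ L) * CF (m + 2 ^ L))%N.
Definition rhsN L m := (u * AF (m + 2 * 2 ^ L) * CF m * CF (m + 2 ^ L)
                        + (d - u) * AF (m + 2 ^ L) * CF m * CF (m + 2 * 2 ^ L))%N.

Lemma GFE s : GF (code_sit s) =
  (0 < sumN (fun m => (2 ^ size s - 1 <= m) * (lhsN (size s) m < rhsN (size s) m))
            (2 ^ (size s).+1 - 1))%N.
Proof.
rewrite /GF /eG ePosE.
rewrite (_ : eval (ERec _ _ _) _ = recf 0 (fun j acc => eval (EAdd (EVar 1) ebody) [:: j, acc & [:: code_sit s]]) (2 ^ (size s).+1 - 1)); last first.
  by rewrite /= lenFE !pow2FE addn1.
rewrite (@recf_sum _ (fun m => eval ebody [:: m; 0; code_sit s])) //.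
f_equal; f_equal; apply: sumN_ext => m _.
rewrite /ebody /econd /elhs /erhs /emT /emF /em /eP1 /eP2 /eLx /eA /eC /= pos_sub lenFE !pow2FE.
rewrite subn_gt0 !addn1 expnS /lhsN /rhsN /AF /CF.
congr (_ * _)%N; case: leqP => H /=; lia.
Qed.


Local Open Scope ring_scope.
Variables (F : seq bool -> rat) (r : rat).
Hypotheses (HF : forall s, F s = ((a (code_sit s))%:R - (b (code_sit s))%:R) / ((c (code_sit s)).+1)%:R)
  (Hpos : forall s, 0 < F s) (Hd : (0 < d)%N) (Hud : (u <= d)%N) (Hr : r = u%:R / d%:R).

Lemma F_AC s : F s = (AF (code_sit s))%:R / (CF (code_sit s))%:R.
Proof.
have := Hpos s; rewrite HF /AF /CF => H.
case: (leqP (b (code_sit s)) (a (code_sit s))) => Hab; first by rewrite natrB.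
exfalso; move: H; rewrite pmulr_lgt0 ?invr_gt0 ?ltr0n // subr_gt0 ltr_nat.
lia.
Qed.

Lemma key t : (0 < Er r (DeltaF F t)) = (lhsN (size t) (code_sit t) < rhsN (size t) (code_sit t))%N.
Proof.
have HC : forall n, 0 < (CF n)%:R :> rat by move=> n; rewrite ltr0n.
have Hd' : 0 < d%:R :> rat by rewrite ltr0n.
set m := code_sit t; set L := size t.
have HK : 0 < d%:R * (CF m)%:R * (CF (m + 2 * 2 ^ L))%:R * (CF (m + 2 ^ L))%:R :> rat.
  by rewrite !mulr_gt0.
rewrite -(pmulr_lgt0 _ HK).
have -> : Er r (DeltaF F t) * (d%:R * (CF m)%:R * (CF (m + 2 * 2 ^ L))%:R * (CF (m + 2 ^ L))%:R)
   = (rhsN L m)%:R - (lhsN L m)%:R.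
  rewrite /Er /DeltaF !F_AC !code_rcons mul1n -/m -/L /rhsN /lhsN natrD !natrM (natrB _ Hud) Hr.
  have H1 := HC m; have H2 := HC (m + 2 * 2 ^ L)%N; have H3 := HC (m + 2 ^ L)%N.
  field; rewrite ?lt0r_neq0 //.
by rewrite subr_gt0 ltr_nat.
Qed.

Lemma dir1_main s : GF (code_sit s) = SrF r F s.
Proof.
rewrite GFE /SrF /SrF_nat; f_equal; apply/idP/existsP.
- move/sumN_pos => [m Hm]; rewrite muln_gt0 => /andP [H1 H2].
  have Hr' : (2 ^ size s - 1 <= m < 2 ^ (size s).+1 - 1)%N.
    by rewrite Hm andbT; rewrite lt0b in H1.
  have [t [Hsz Hct]] := code_onto Hr'.
  pose tu := @Tuple (size s) bool t (introT eqP Hsz); exists tu => /=.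
  by rewrite key Hsz Hct; rewrite lt0b in H2.
- move=> [t Ht]; apply/sumN_pos; exists (code_sit t).
    by have := code_range t; rewrite size_tuple => /andP [].
  rewrite key size_tuple in Ht.
  have := code_range t; rewrite size_tuple => /andP [-> _].
  by rewrite Ht.
Qed.

End Dir1.
Local Open Scope ring_scope.

Lemma dir1 (F : seq bool -> rat) (r : rat) : F_C F -> 0 <= r <= 1 ->
  temporal (SrF r F) /\ recursive_sit_bool (SrF r F).
Proof.
move=> [[_ _] Hpos [a [b [c [Ha Hb Hc HF]]]]] /andP [Hr0 Hr1].
split; first by move=> s t Hst; rewrite /SrF Hst.
set u := `|numq r|%N; set d := `|denq r|%N.
have Hr : r = u%:R / d%:R.
  rewrite /u /d !natr_absz (ger0_norm (ltW (denq_gt0 r))) ger0_norm ?numq_ge0 //.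
  by rewrite divq_num_den.
have Hd : (0 < d)%N by rewrite /d absz_gt0 gt_eqF ?denq_gt0.
have Hud : (u <= d)%N.
  move: Hr1; rewrite Hr ler_pdivrMr ?ltr0n // mul1r ler_nat //.
exists (GF a b c u d); split; first exact: GF_rec.
move=> s; exact: dir1_main.
Qed.

Close Scope ring_scope.
Unset Implicit Arguments.
Set Strict Implicit.

Theorem proposition27 (p q : rat) :
  (0 <= p <= 1)%R -> (0 <= q <= 1)%R ->
  forall S : seq bool -> bool,
    in_Spq_FC p q S <-> (temporal S /\ recursive_sit_bool S).
Proof.
move=> Hp Hq S; split.
- move=> [F [r [HFC Hr HS]]].
  have Hr01 : (0 <= r <= 1)%R by case: Hr => ->.
  have [Ht [g [Hg Hg']]] := dir1 HFC Hr01.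
  split; first by move=> s t H; rewrite !HS; apply: Ht.
  by exists g; split => // s; rewrite HS Hg'.
- move=> [Ht [g [Hg HgS]]].
  case/andP: Hp => Hp0 _.
  exact: (@dir2 S g (0 < p)%R Ht Hg HgS p q Hp0 erefl).
Qed.
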